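(* Let $\mathbf{o}_1,\dots,\mathbf{o}_Q\in\mathbb{R}^2$ be fixed, $\mathbf{x},\mathbf{v}\in\mathbb{R}^2$ with $\mathbf{v}\neq\mathbf{0}$, and suppose $\mathbf{x}+t\mathbf{v}\neq\mathbf{o}_q$ for all $t\ge1$ and all $q$. Let $\bm{l}_q=\mathbf{x}-\mathbf{o}_q$, $\mathbf{d}_{t,q}=\bm{l}_q+t\mathbf{v}$, $d_{t,q}=\|\mathbf{d}_{t,q}\|$, $s_{T,q}^{(n)}=\sum_{t=1}^T t^n/d_{t,q}^4$, $\mathbf{P}_v^\perp=\mathbf{I}-\mathbf{v}\mathbf{v}^{\mathrm T}/\|\mathbf{v}\|^2$, and $$\mathbf{A}_{T,v}=\sum_{q=1}^Q\Big[s_{T,q}^{(2)}(\bm{l}_q^{\mathrm T}\bm{l}_q\mathbf{I}-\bm{l}_q\bm{l}_q^{\mathrm T})+s_{T,q}^{(3)}(2\mathbf{v}^{\mathrm T}\bm{l}_q\mathbf{I}-\bm{l}_q\mathbf{v}^{\mathrm T}-\mathbf{v}\bm{l}_q^{\mathrm T})+s_{T,q}^{(4)}(\|\mathbf{v}\|^2\mathbf{I}-\mathbf{v}\mathbf{v}^{\mathrm T})\Big].$$ Then, as $T\to\infty$, $\lambda_{\min}(\mathbf{A}_{T,v})-\sum_{q=1}^Q s_{T,q}^{(2)}\|\mathbf{P}_v^\perp\bm{l}_q\|^2\to0$ and $\lambda_{\max}(\mathbf{A}_{T,v})\big/\big(\sum_{q=1}^Q s_{T,q}^{(4)}\|\mathbf{v}\|^2\big)\to1$.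 *)

(* Defs.v *)
From HB Require Import structures.
From mathcomp Require Import all_boot all_order all_algebra.
From mathcomp Require Import all_classical all_reals all_analysis.
Set Implicit Arguments. Unset Strict Implicit. Unset Printing Implicit Defensive.
Import Order.TTheory GRing.Theory Num.Theory numFieldNormedType.Exports.
Local Open Scope ring_scope.
Local Open Scope classical_set_scope.

Definition dotv (R : realType) (u w : 'cV[R]_2) : R := (u^T *m w) 0 0.
Definition normv (R : realType) (u : 'cV[R]_2) : R := Num.sqrt (dotv u u).

Definition lambda_min (R : realType) (A : 'M[R]_2) : R :=
  inf [set a : R | eigenvalue A a].
Definition lambda_max (R : realType) (A : 'M[R]_2) : R :=
  sup [set a : R | eigenvalue A a].

Definition lvec (R : realType) (x o : 'cV[R]_2) : 'cV[R]_2 := x - o.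
Definition dist_tq (R : realType) (x v o : 'cV[R]_2) (t : nat) : R :=
  normv (lvec x o + t%:R *: v).
Definition sTq (R : realType) (x v o : 'cV[R]_2) (n T : nat) : R :=
  \sum_(1 <= t < T.+1) (t%:R ^+ n / dist_tq x v o t ^+ 4).

Definition Pperp (R : realType) (v : 'cV[R]_2) : 'M[R]_2 :=
  1%:M - (normv v ^+ 2)^-1 *: (v *m v^T).

Definition AT (R : realType) (Q : nat) (o : 'I_Q -> 'cV[R]_2)
  (x v : 'cV[R]_2) (T : nat) : 'M[R]_2 :=
  \sum_(q < Q)
    let l := lvec x (o q) in
    (sTq x v (o q) 2 T *: ((dotv l l)%:M - l *m l^T)
     + sTq x v (o q) 3 T *: ((2 * dotv v l)%:M - l *m v^T - v *m l^T)
     + sTq x v (o q) 4 T *: ((normv v ^+ 2)%:M - v *m v^T)).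

(* Main.v *)
Require Import Defs.
From HB Require Import structures.
From mathcomp Require Import all_boot all_order all_algebra.
From mathcomp Require Import all_classical all_reals all_analysis.
From mathcomp Require Import ring lra.
Import Order.TTheory GRing.Theory Num.Theory numFieldNormedType.Exports.
Local Open Scope ring_scope.
Local Open Scope classical_set_scope.
Section LA.
Variable R : realType.

Lemma sum2 (F : 'I_2 -> R) : \sum_(i < 2) F i = F 0 + F 1.
Proof. rewrite big_ord_recl big_ord1; congr (_ + F _); exact: val_inj. Qed.

Lemma eig2 (A : 'M[R]_2) a :
  eigenvalue A a <-> (A 0 0 - a) * (A 1 1 - a) - A 0 1 * A 1 0 = 0.
Proof.
split.
- move=> /eigenvalueP [u uA u0].
  have e0 : (u *m A) 0 0 = (a *: u) 0 0 by rewrite uA.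
  have e1 : (u *m A) 0 1 = (a *: u) 0 1 by rewrite uA.
  move: e0 e1; rewrite !mxE !sum2 /= => e0 e1.
  have : u 0 0 != 0 \/ u 0 1 != 0.
    case: (eqVneq (u 0 0) 0) => h0; last by left.
    case: (eqVneq (u 0 1) 0) => h1; last by right.
    exfalso; move/negP: u0; apply; apply/eqP/matrixP => i j; rewrite mxE.
    rewrite (ord1 i); case: j => [[|[|j]] Hj] //.
    + by rewrite (_ : Ordinal Hj = 0) //; apply: val_inj.
    + by rewrite (_ : Ordinal Hj = 1) //; apply: val_inj.
  case=> h.
  + apply: (mulIf h); rewrite mul0r; set d := _ - _.
    rewrite (_ : d * u 0 0 = (A 1 1 - a) * (u 0 0 * A 0 0 + u 0 1 * A 1 0 - a * u 0 0) - A 1 0 * (u 0 0 * A 0 1 + u 0 1 * A 1 1 - a * u 0 1)); last by rewrite /d; ring.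
    by rewrite e0 e1 !subrr !mulr0 subrr.
  + apply: (mulIf h); rewrite mul0r; set d := _ - _.
    rewrite (_ : d * u 0 1 = (A 0 0 - a) * (u 0 0 * A 0 1 + u 0 1 * A 1 1 - a * u 0 1) - A 0 1 * (u 0 0 * A 0 0 + u 0 1 * A 1 0 - a * u 0 0)); last by rewrite /d; ring.
    by rewrite e0 e1 !subrr !mulr0 subrr.
- move=> hd; apply/eigenvalueP.
  pose mk (p q : R) : 'rV[R]_2 := \row_(j < 2) (if j == 0 then p else q).
  
  have mkA p q : mk p q *m A = a *: mk p q <->
     p * A 0 0 + q * A 1 0 = a * p /\ p * A 0 1 + q * A 1 1 = a * q.
    split.
    + move=> H; have e0 : (mk p q *m A) 0 0 = (a *: mk p q) 0 0 by rewrite H.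
      have e1 : (mk p q *m A) 0 1 = (a *: mk p q) 0 1 by rewrite H.
      by move: e0 e1; rewrite !mxE !sum2 !mxE /=.
    + move=> [H0 H1]; apply/matrixP => i j; rewrite (ord1 i) !mxE sum2 !mxE /=.
      case: j => [[|[|j]] Hj] //=.
      * by rewrite (_ : Ordinal Hj = 0); [exact H0| exact: val_inj].
      * by rewrite (_ : Ordinal Hj = 1); [exact H1| exact: val_inj].
  have mk0 p q : mk p q != 0 <-> (p != 0 \/ q != 0).
    split.
    + move=> H; case: (eqVneq p 0) => hp; last by left.
      case: (eqVneq q 0) => hq; last by right.
      exfalso; move/negP: H; apply; apply/eqP/matrixP => i j; rewrite !mxE.
      by case: (j == 0); rewrite ?hp ?hq.
    + case=> H; apply/negP => /eqP/matrixP M.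
      * by move: (M 0 0); rewrite !mxE /=; apply/eqP.
      * by move: (M 0 1); rewrite !mxE /=; apply/eqP.
  case: (eqVneq (A 1 0) 0) => h10.
  + case: (eqVneq (A 1 1 - a) 0) => h11.
    * exists (mk 0 1); last by apply/mk0; right; exact: oner_neq0.
      apply/mkA; split; first by rewrite h10; ring.
      by move/eqP: h11; rewrite subr_eq0 => /eqP ->; ring.
    * have h00 : A 0 0 = a.
        move: hd; rewrite h10 mulr0 subr0 => /eqP; rewrite mulf_eq0 (negbTE h11) orbF.
        by rewrite subr_eq0 => /eqP.
      exists (mk (A 1 1 - a) (- A 0 1)); last by apply/mk0; left.
      by apply/mkA; split; rewrite ?h00 ?h10; ring.
  + exists (mk (A 1 0) (- (A 0 0 - a))); last by apply/mk0; left.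
    apply/mkA; split; first by ring.
    move: hd => /eqP; rewrite subr_eq0 => /eqP hd.
    apply/eqP; rewrite -subr_eq0; apply/eqP.
    transitivity (A 1 0 * A 0 1 - (A 0 0 - a) * (A 1 1 - a)); first by ring.
    by rewrite hd mulrC subrr.
Qed.

Lemma eigS (A : 'M[R]_2) a : A 0 1 = A 1 0 ->
  eigenvalue A a <-> (a = (A 0 0 + A 1 1)/2 - Num.sqrt (((A 0 0 - A 1 1)/2)^+2 + A 0 1 ^+2)
     \/ a = (A 0 0 + A 1 1)/2 + Num.sqrt (((A 0 0 - A 1 1)/2)^+2 + A 0 1 ^+2)).
Proof.
move=> sym; rewrite eig2 -sym.
set m := (A 0 0 + A 1 1)/2; set k := ((A 0 0 - A 1 1)/2)^+2 + A 0 1 ^+2.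
have k0 : 0 <= k by rewrite /k addr_ge0 // sqr_ge0.
have -> : (A 0 0 - a) * (A 1 1 - a) - A 0 1 * A 0 1 = (a - m)^+2 - (Num.sqrt k)^+2.
  by rewrite sqr_sqrtr // /k /m; field.
split.
- move/eqP; rewrite subr_eq0 eqf_sqr => /orP [] /eqP H.
  + by right; rewrite -H; ring.
  + by left; rewrite -[a](subrK m) H; ring.
- case=> ->; apply/eqP; rewrite subr_eq0; apply/eqP; ring.
Qed.

Lemma lam2 (A : 'M[R]_2) : A 0 1 = A 1 0 ->
  lambda_min A = (A 0 0 + A 1 1)/2 - Num.sqrt (((A 0 0 - A 1 1)/2)^+2 + A 0 1 ^+2) /\
  lambda_max A = (A 0 0 + A 1 1)/2 + Num.sqrt (((A 0 0 - A 1 1)/2)^+2 + A 0 1 ^+2).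
Proof.
move=> sym.
set m := (A 0 0 + A 1 1)/2; set h := Num.sqrt _.
have h0 : 0 <= h by apply: sqrtr_ge0.
have S : forall a, [set a | eigenvalue A a] a <-> (a = m - h \/ a = m + h).
  by move=> a; rewrite /= eigS.
have lo : lbound [set a | eigenvalue A a] (m - h).
  by move=> a /S [->|->]; lra.
have up : ubound [set a | eigenvalue A a] (m + h).
  by move=> a /S [->|->]; lra.
split.
- apply/le_anti/andP; split.
  + apply: ge_inf; first by exists (m - h).
    by apply/S; left.
  + by apply: lb_le_inf => //; exists (m - h); apply/S; left.
- apply/le_anti/andP; split.
  + by apply: ge_sup => //; exists (m + h); apply/S; right.
  + apply: ub_le_sup; first by exists (m + h).
    by apply/S; right.
Qed.
Definition small (Y : nat -> R) := (fun T => Y T / Num.sqrt T%:R) @ \oo --> (0:R).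

Lemma small_sum (b : nat -> R) (K : R) :
  (forall t, (1 <= t)%N -> 0 <= b t /\ b t <= K / t%:R) ->
  small (fun T => \sum_(1 <= t < T.+1) b t).
Proof.
move=> hb.
set S := fun T => \sum_(1 <= t < T.+1) b t.
have S0 : S 0%N = 0 by rewrite /S big_geq.
have SS : forall n, S n.+1 = S n + b n.+1 by move=> n; rewrite /S big_nat_recr.
have Sge0 : forall n, 0 <= S n.
  elim=> [|n IH]; first by rewrite S0.
  by rewrite SS; have [h1 _] := hb n.+1 isT; rewrite addr_ge0.
have hb' : (fun n => b n.+1) @ \oo --> 0.
  apply: (@squeeze_cvgr _ _ _ _ (cst 0) (fun n => K * harmonic n)).
  - apply: nearW => n; have [h1 h2] := hb n.+1 isT; apply/andP; split => //.
  - exact: cvg_cst.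
  - rewrite -(mulr0 K); apply: cvgMl_tmp; exact: cvg_harmonic.
have hS1 : (fun T => S T / T%:R) @ \oo --> 0.
  rewrite -cvg_shiftS /=.
  suff -> : (fun n => S n.+1 / n.+1%:R) = arithmetic_mean (fun n => b n.+1) by exact: cesaro.
  apply: funext => n; rewrite /arithmetic_mean /= seriesEnat /= mulrC /S big_add1 /=.
  done.
have hS2 : (fun T => S T ^+ 2 / T%:R) @ \oo --> 0.
  set u := fun k => S k.+1 ^+ 2 - S k ^+ 2.
  have hu : u @ \oo --> 0.
    apply: (@squeeze_cvgr _ _ _ _ (cst 0) (fun k => (2 * K) * (S k.+1 / k.+1%:R))).
    - apply: nearW => n; have [h1 h2] := hb n.+1 isT.
      have e : u n = b n.+1 * (S n.+1 + S n) by rewrite /u SS; ring.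
      rewrite /= e; apply/andP; split; first by rewrite mulr_ge0 // addr_ge0.
      have h3 : S n.+1 + S n <= 2 * S n.+1 by rewrite SS; lra.
      apply: (le_trans (ler_wpM2l h1 h3)).
      have h4 : 0 <= 2 * S n.+1 by rewrite mulr_ge0.
      apply: (le_trans (ler_wpM2r h4 h2)); rewrite le_eqVlt; apply/orP; left; apply/eqP; ring.
    - exact: cvg_cst.
    - rewrite -(mulr0 (2 * K)); apply: cvgMl_tmp; by move: hS1; rewrite -cvg_shiftS.
  rewrite -cvg_shiftS /=.
  suff -> : (fun n => S n.+1 ^+ 2 / n.+1%:R) = arithmetic_mean u by exact: cesaro.
  apply: funext => n; rewrite /arithmetic_mean /= seriesEnat /= mulrC /u.
  by rewrite telescope_sumr // S0 expr0n /= subr0.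
rewrite /small.
have -> : (fun T => S T / Num.sqrt T%:R) = Num.sqrt \o (fun T => S T ^+ 2 / T%:R).
  apply: funext => T /=; rewrite sqrtrM ?sqr_ge0 // sqrtr_sqr ger0_norm // sqrtrV //.
rewrite -sqrtr0; apply: continuous_cvg => //; exact: sqrt_continuous.
Qed.
Lemma ptw (p E r X N c e s y w : R) : 0 < N -> 0 < c -> 1 <= s -> 0 <= e ->
  e <= N^+2 * c / 4 -> `|p| <= e * s -> `|E| <= e * s -> `|r| <= e * s ->
  c * s^+2 <= X -> y = N^+2 * X + E - p -> w = Num.sqrt (y^+2 + 4 * r^+2) ->
  `|(y - w) / (2 * N)| <= 4 / (N^+3 * c) * e^+2 /\
  `|(p + (N^+2 * X + E) + w) / (2 * N^+2 * X) - 1| <= 2 / (N^+2 * c) * e.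
Proof.
move=> N0 c0 s1 e0 ec hp hE hr hX ey ew.
have /andP[hp1 hp2] : - (e * s) <= p <= e * s by rewrite -ler_norml.
have /andP[hE1 hE2] : - (e * s) <= E <= e * s by rewrite -ler_norml.
have /andP[hr1 hr2] : - (e * s) <= r <= e * s by rewrite -ler_norml.
have s0 : 0 < s by apply: lt_le_trans s1.
have hN : N != 0 by rewrite gt_eqF.
have hc : c != 0 by rewrite gt_eqF.
have N2 : 0 < N^+2 by rewrite exprn_gt0.
have ss : s <= s^+2 by rewrite expr2; nra.
have A1 : N^+2 * (c * s^+2) <= N^+2 * X by rewrite ler_wpM2l // ltW.
have A2 : e * s <= N^+2 * c / 4 * s by rewrite ler_wpM2r // ltW.
have A3 : N^+2 * c / 4 * s <= N^+2 * c / 4 * s^+2.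
  by rewrite ler_wpM2l // divr_ge0 // mulr_ge0 // ltW.
have ys : N^+2 * c * s^+2 / 2 <= y by rewrite ey; lra.
have ypos : 0 < N^+2 * c * s^+2 / 2 by rewrite divr_gt0 // !mulr_gt0 // exprn_gt0.
have y0 : 0 < y by exact: lt_le_trans ypos ys.
have Dge0 : 0 <= y^+2 + 4 * r^+2 by rewrite addr_ge0 ?sqr_ge0 // mulr_ge0 // sqr_ge0.
have w0 : 0 <= w by rewrite ew; apply: sqrtr_ge0.
have w2 : w^+2 = y^+2 + 4 * r^+2 by rewrite ew sqr_sqrtr.
have r2 : r^+2 <= (e * s)^+2 by nra.
have yw : y <= w.
  rewrite -(ger0_norm (ltW y0)) -sqrtr_sqr ew ler_sqrt //.
  by rewrite lerDl mulr_ge0 // sqr_ge0.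
have wy : w <= y + 2 * (e * s).
  have h : 0 <= y + 2 * (e * s) by nra.
  rewrite -(ger0_norm h) -sqrtr_sqr ew ler_sqrt ?sqr_ge0 //.
  nra.
have B1 : (w - y) * y <= 4 * (e * s)^+2.
  have : (w - y) * y <= (w - y) * (w + y) by rewrite ler_wpM2l ?subr_ge0 //; lra.
  nra.
have B2 : (w - y) * (N^+2 * c) <= 8 * e^+2.
  have : (w - y) * (N^+2 * c * s^+2 / 2) <= (w - y) * y by rewrite ler_wpM2l ?subr_ge0.
  have sp : 0 < s^+2 by rewrite exprn_gt0.
  move=> h; have h2 : (w - y) * (N^+2 * c) * s^+2 <= 8 * e^+2 * s^+2.
    have -> : (w - y) * (N^+2 * c) * s^+2 = 2 * ((w - y) * (N^+2 * c * s^+2 / 2)) by field.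
    have -> : 8 * e^+2 * s^+2 = 2 * (4 * (e * s)^+2) by ring.
    by rewrite ler_pM2l //; apply: le_trans h B1.
  by rewrite -(ler_pM2r sp).
split.
- rewrite ler_norml; apply/andP; split; last first.
    apply: (@le_trans _ _ 0); last by rewrite mulr_ge0 ?sqr_ge0 // divr_ge0 // ltW // mulr_gt0 // exprn_gt0.
    by rewrite pmulr_lle0 ?subr_le0 // invr_gt0 mulr_gt0.
  rewrite lerNl -mulNr opprB ler_pdivrMr ?mulr_gt0 //.
  have -> : 4 / (N ^+ 3 * c) * e ^+ 2 * (2 * N) = 8 * e^+2 / (N^+2 * c) by field; rewrite ?hN ?hc.
  by rewrite ler_pdivlMr ?mulr_gt0.
- have Xp : 0 < X by apply: lt_le_trans hX; rewrite mulr_gt0 // exprn_gt0.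
  have hX0 : X != 0 by rewrite gt_eqF.
  have Zp : 0 < 2 * N^+2 * X by rewrite !mulr_gt0.
  have -> : (p + (N^+2 * X + E) + w) / (2 * N^+2 * X) - 1 = (2 * E + (w - y)) / (2 * N^+2 * X).
    by rewrite ey; field; rewrite ?hN ?hX0.
  rewrite normrM normfV (gtr0_norm Zp) ler_pdivrMr //.
  have -> : 2 / (N ^+ 2 * c) * e * (2 * N ^+ 2 * X) = 4 * e * X / c by field; rewrite ?hN ?hc.
  rewrite ler_pdivlMr //.
  have h1 : `|2 * E + (w - y)| <= 4 * e * s by rewrite ler_norml; apply/andP; split; lra.
  apply: (le_trans (ler_wpM2r (ltW c0) h1)); nra.
Qed.


Lemma smallD f g : small f -> small g -> small (fun T => f T + g T).
Proof.
move=> hf hg; rewrite /small.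
have -> : (fun T => (f T + g T) / Num.sqrt T%:R) =
   (fun T => f T / Num.sqrt T%:R) + (fun T => g T / Num.sqrt T%:R).
  by apply: funext => T /=; rewrite mulrDl.
by rewrite -(addr0 0); apply: cvgD.
Qed.

Lemma smallZ k f : small f -> small (fun T => k * f T).
Proof.
move=> hf; rewrite /small.
have -> : (fun T => (k * f T) / Num.sqrt T%:R) = (fun T => k * (f T / Num.sqrt T%:R)).
  by apply: funext => T /=; rewrite mulrA.
by rewrite -(mulr0 k); apply: cvgMl_tmp.
Qed.

Lemma small_big (I : finType) (F : I -> nat -> R) :
  (forall i, small (F i)) -> small (fun T => \sum_i F i T).
Proof.
move=> hF.
have -> : (fun T => \sum_i F i T) = \sum_i F i by apply: funext => T; rewrite fct_sumE.
apply: (big_ind small) => //.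
- rewrite /small (_ : (fun T => _) = cst 0); first exact: cvg_cst.
  by apply: funext => T /=; rewrite mul0r.
- by move=> f g; apply: smallD.
Qed.

Lemma absdiv (Y s : R) : 0 < s -> `|Y| = `|Y / s| * s.
Proof. by move=> s0; rewrite normrM normfV (gtr0_norm s0) mulfVK // gt_eqF. Qed.

Lemma final (P E Rr X : nat -> R) (N c : R) : 0 < N -> 0 < c ->
  (forall T, c * T%:R <= X T) -> small P -> small E -> small Rr ->
  ((fun T => (P T + (N^+2 * X T + E T))/(2*N)
     - Num.sqrt ((N^+2 * X T + E T - P T)^+2 + 4 * Rr T ^+ 2)/(2*N) - P T / N) @ \oo --> (0:R)) /\
  ((fun T => ((P T + (N^+2 * X T + E T))/(2*N)
     + Num.sqrt ((N^+2 * X T + E T - P T)^+2 + 4 * Rr T ^+ 2)/(2*N)) / (X T * N)) @ \oo --> (1:R)).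
Proof.
move=> N0 c0 hX hP hE hR.
have hN : N != 0 by rewrite gt_eqF.
pose e := fun T => `|P T / Num.sqrt T%:R| + `|E T / Num.sqrt T%:R| + `|Rr T / Num.sqrt T%:R|.
have he : e @ \oo --> 0.
  rewrite -[X in _ --> X](_ : `|0:R| + `|0:R| + `|0:R| = 0); last by rewrite normr0 !addr0.
  by apply: cvgD; [apply: cvgD|]; apply: cvg_norm.
have K0 : 0 < N^+2 * c / 4 by rewrite divr_gt0 // mulr_gt0 // exprn_gt0.
have key : \forall T \near \oo, (1 <= T)%N /\ e T <= N^+2 * c / 4.
  have h1 : \forall T \near \oo, (1 <= T)%N by exists 1%N.
  have h2 : \forall t \near \oo, e t <= N^+2 * c / 4 by apply: (cvgr_le 0 he).
  by apply: filterS2; last 2 first; [exact h1| exact h2| move=> T a b; split].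
have ptwT : \forall T \near \oo,
   `|(N^+2 * X T + E T - P T - Num.sqrt ((N^+2 * X T + E T - P T)^+2 + 4 * Rr T^+2)) / (2 * N)|
     <= 4 / (N^+3 * c) * e T^+2 /\
   `|(P T + (N^+2 * X T + E T) + Num.sqrt ((N^+2 * X T + E T - P T)^+2 + 4 * Rr T^+2))
        / (2 * N^+2 * X T) - 1| <= 2 / (N^+2 * c) * e T.
  apply: filterS key => T [T1 eT].
  have s1 : 1 <= Num.sqrt T%:R :> R.
    have h : Num.sqrt 1 <= Num.sqrt T%:R :> R by rewrite ler_sqrt // ler1n.
    by rewrite sqrtr1 in h.
  have s0 : 0 < Num.sqrt T%:R :> R by apply: lt_le_trans s1; exact: ltr01.
  have e0 : 0 <= e T by rewrite /e !addr_ge0.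
  apply: (ptw (P T) (E T) (Rr T) (X T) N c (e T) (Num.sqrt T%:R)) => //.
  - rewrite (absdiv _ _ s0); apply: ler_wpM2r; first exact: ltW.
    rewrite /e; have := normr_ge0 (E T / Num.sqrt T%:R); have := normr_ge0 (Rr T / Num.sqrt T%:R); lra.
  - rewrite (absdiv _ _ s0); apply: ler_wpM2r; first exact: ltW.
    rewrite /e; have := normr_ge0 (P T / Num.sqrt T%:R); have := normr_ge0 (Rr T / Num.sqrt T%:R); lra.
  - rewrite (absdiv _ _ s0); apply: ler_wpM2r; first exact: ltW.
    rewrite /e; have := normr_ge0 (E T / Num.sqrt T%:R); have := normr_ge0 (P T / Num.sqrt T%:R); lra.
  - by rewrite sqr_sqrtr // ler0n.
split.
- set g := fun T => 4 / (N^+3 * c) * e T^+2.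
  have hg : g @ \oo --> 0.
    rewrite /g (_ : 0 = 4 / (N^+3 * c) * (0 * 0)); last by rewrite !mulr0.
    apply: cvgMl_tmp; rewrite (_ : (fun T => e T ^+ 2) = e \* e); first exact: cvgM.
    by apply: funext => T; rewrite expr2.
  apply: (@squeeze_cvgr _ _ _ _ (fun T => - g T) g); last 2 first.
  + by rewrite -oppr0; apply: cvgN.
  + exact: hg.
  apply: filterS ptwT => T [h1 _].
  rewrite -ler_norml /g; apply: le_trans h1; rewrite le_eqVlt; apply/orP; left; apply/eqP.
  by congr `|_|; field.
- set g := fun T => 2 / (N^+2 * c) * e T.
  have hg : g @ \oo --> 0.
    by rewrite /g -(mulr0 (2 / (N^+2 * c))); apply: cvgMl_tmp.
  apply: (@squeeze_cvgr _ _ _ _ (fun T => 1 - g T) (fun T => 1 + g T)); last 2 first.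
  + by rewrite -[X in _ --> X](subr0 1); apply: cvgB => //; exact: cvg_cst.
  + by rewrite -[X in _ --> X](addr0 1); apply: cvgD => //; exact: cvg_cst.
  apply: filterS2; last 2 first; [exact ptwT | exact key | move=> T [_ h2] [T1 _]].
  have Xp : 0 < X T by apply: lt_le_trans (hX T); apply: mulr_gt0 => //; rewrite ltr0n.
  have : `|((P T + (N^+2 * X T + E T))/(2*N) + Num.sqrt ((N^+2 * X T + E T - P T)^+2
     + 4 * Rr T ^+ 2)/(2*N)) / (X T * N) - 1| <= g T.
    apply: le_trans h2; rewrite le_eqVlt; apply/orP; left; apply/eqP.
    by congr `|_|; field; rewrite hN (gt_eqF Xp).
  rewrite ler_norml => /andP[a b]; apply/andP; split; lra.
Qed.
Lemma lowb (g : nat -> R) (m : nat) : (forall t, (1 <= t)%N -> 0 < g t) ->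
  exists2 d, 0 < d & forall t, (1 <= t <= m)%N -> d <= g t.
Proof.
move=> hg; elim: m => [|m [d d0 hd]].
  by exists 1 => // t /andP[a b]; move: (leq_trans a b).
exists (Num.min d (g m.+1)).
  by rewrite lt_min d0 hg.
move=> t /andP[t1 tm]; case: (eqVneq t m.+1) => [->|ne].
  by rewrite ge_min lexx orbT.
rewrite ge_min (hd t) //; rewrite t1 /=; by rewrite -ltnS ltn_neqAle ne tm.
Qed.

Lemma qlow (a b v0 v1 : R) : 0 < v0^+2 + v1^+2 ->
  (forall t : nat, (1 <= t)%N -> 0 < (a + t%:R * v0)^+2 + (b + t%:R * v1)^+2) ->
  exists2 k, 0 < k & forall t : nat, (1 <= t)%N ->
    k * t%:R^+2 <= (a + t%:R * v0)^+2 + (b + t%:R * v1)^+2.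
Proof.
move=> N0 hg.
set N := v0^+2 + v1^+2; set lv := a * v0 + b * v1.
pose m := (Num.truncn (4 * `|lv| / N)).+1.
have hm : 4 * `|lv| / N < m%:R by apply: truncnS_gt.
have [d d0 hd] := lowb _ m hg.
have m0 : 0 < m%:R :> R by rewrite ltr0n.
exists (Num.min (N/2) (d / m%:R^+2)).
  by rewrite lt_min divr_gt0 //= divr_gt0 // exprn_gt0.
move=> t t1; case: (leqP t m) => htm.
- apply: le_trans (hd t _); last by rewrite t1 htm.
  apply: le_trans (_ : d / m%:R^+2 * t%:R^+2 <= d).
    by apply: ler_wpM2r; rewrite ?sqr_ge0 // ge_min lexx orbT.
  rewrite mulrAC ler_pdivrMr ?exprn_gt0 //; apply: ler_wpM2l; first exact: ltW.
  have : t%:R <= m%:R :> R by rewrite ler_nat.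
  have : 0 <= t%:R :> R by rewrite ler0n.
  nra.
- apply: le_trans (_ : N / 2 * t%:R^+2 <= _).
    by apply: ler_wpM2r; rewrite ?sqr_ge0 // ge_min lexx.
  have ht : m%:R < t%:R :> R by rewrite ltr_nat.
  have h1 : 4 * `|lv| < N * t%:R.
    by rewrite -ltr_pdivrMl // mulrC; apply: lt_trans hm ht.
  have h2 : - `|lv| <= lv by have := ler_norm (- lv); rewrite normrN; lra.
  have t0 : 0 <= t%:R :> R by rewrite ler0n.
  have h3 : 0 <= t%:R * (N * t%:R - 4 * `|lv|) by rewrite mulr_ge0 // subr_ge0 ltW.
  have h4 : t%:R * (- `|lv|) <= t%:R * lv by rewrite ler_wpM2l.
  have h5 : 0 <= a^+2 + b^+2 by rewrite addr_ge0 // sqr_ge0.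
  have -> : (a + t%:R * v0)^+2 + (b + t%:R * v1)^+2 = a^+2 + b^+2 + 2 * t%:R * lv + N * t%:R^+2.
    by rewrite /N /lv; ring.
  nra.
Qed.

Lemma qup (a b v0 v1 : R) : exists2 K, 0 < K & forall t : nat, (1 <= t)%N ->
    (a + t%:R * v0)^+2 + (b + t%:R * v1)^+2 <= K * t%:R^+2.
Proof.
exists ((`|a| + `|v0|)^+2 + (`|b| + `|v1|)^+2 + 1).
  by rewrite ltr_pwDr // addr_ge0 // sqr_ge0.
move=> t t1.
have T1 : 1 <= t%:R :> R by rewrite ler1n.
have key : forall p q : R, (p + t%:R * q)^+2 <= (`|p| + `|q|)^+2 * t%:R^+2.
  move=> p q.
  have e1 : `|p + t%:R * q| <= t%:R * (`|p| + `|q|).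
    apply: le_trans (ler_normD _ _) _; rewrite normrM ger0_norm ?ler0n //.
    have := normr_ge0 p; nra.
  have e2 : (p + t%:R * q)^+2 = `|p + t%:R * q|^+2 by rewrite -normrX ger0_norm ?sqr_ge0.
  rewrite e2; have := normr_ge0 (p + t%:R * q); nra.
have := key a v0; have := key b v1; have := sqr_ge0 (t%:R : R); nra.
Qed.
Lemma tb (g : nat -> R) (n : nat) k t : 0 < k -> (n <= 3)%N -> (1 <= t)%N ->
  k * t%:R^+2 <= g t -> 0 <= t%:R ^+ n / g t ^+ 2 /\ t%:R ^+ n / g t ^+ 2 <= k^-2 / t%:R.
Proof.
move=> k0 n3 t1 hk.
have T1 : 1 <= t%:R :> R by rewrite ler1n.
have T0 : 0 < t%:R :> R by rewrite ltr0n.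
have kt : 0 < k * t%:R^+2 by rewrite mulr_gt0 // exprn_gt0.
have g0 : 0 < g t by apply: lt_le_trans hk.
split; first by rewrite divr_ge0 // ?exprn_ge0 // ltW.
rewrite ler_pdivrMr ?exprn_gt0 //.
have h1 : (k * t%:R^+2)^+2 <= g t ^+2 by nra.
apply: le_trans (_ : k^-2 / t%:R * (k * t%:R^+2)^+2 <= _); last first.
  by apply: ler_wpM2l => //; rewrite divr_ge0 // ?invr_ge0 ?exprn_ge0 // ltW.
have -> : k^-2 / t%:R * (k * t%:R^+2)^+2 = t%:R^+3 by field; rewrite ?(gt_eqF k0) ?(gt_eqF T0).
by apply: ler_weXn2l.
Qed.

Lemma s_small (g : nat -> R) (n : nat) k : 0 < k -> (n <= 3)%N ->
  (forall t, (1 <= t)%N -> k * t%:R^+2 <= g t) ->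
  small (fun T => \sum_(1 <= t < T.+1) (t%:R ^+ n / g t ^+ 2)).
Proof.
move=> k0 n3 hk; refine (small_sum _ (k^-2) _) => t t1.
exact: (tb g n k t k0 n3 t1 (hk t t1)).
Qed.

Lemma s4_low (g : nat -> R) K : 0 < K -> (forall t, (1 <= t)%N -> 0 < g t) ->
  (forall t, (1 <= t)%N -> g t <= K * t%:R^+2) ->
  forall T, T%:R / K^+2 <= \sum_(1 <= t < T.+1) (t%:R ^+ 4 / g t ^+ 2).
Proof.
move=> K0 g0 hK T.
apply: le_trans (_ : \sum_(1 <= t < T.+1) (1 / K^+2) <= _).
  by rewrite sumr_const_nat subn1 /= div1r mulr_natl.
apply: ler_sum_nat => t /andP[t1 _].
have gp := g0 t t1.
rewrite ler_pdivrMr ?exprn_gt0 //.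
rewrite mulrAC ler_pdivlMr ?exprn_gt0 //.
have h := hK t t1.
have -> : t%:R ^+ 4 * K ^+ 2 = (K * t%:R^+2)^+2 by ring.
have := ltW gp; nra.
Qed.
End LA.
Section M.
Variable R : realType.
Lemma dotvE (u w : 'cV[R]_2) : dotv u w = u 0 0 * w 0 0 + u 1 0 * w 1 0.
Proof. by rewrite /dotv !mxE sum2 !mxE. Qed.
Lemma normv2 (u : 'cV[R]_2) : normv u ^+ 2 = dotv u u.
Proof. by rewrite /normv sqr_sqrtr // dotvE addr_ge0 // -expr2 sqr_ge0. Qed.

Lemma ATE (Q : nat) (o : 'I_Q -> 'cV[R]_2) (x v : 'cV[R]_2) T (i j : 'I_2) :
  AT o x v T i j = \sum_(q < Q)
   (sTq x v (o q) 2 T * (dotv (lvec x (o q)) (lvec x (o q)) *+ (i == j) - (x i 0 - o q i 0) * (x j 0 - o q j 0))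
  + sTq x v (o q) 3 T * ((2 * dotv v (lvec x (o q))) *+ (i == j) - (x i 0 - o q i 0) * v j 0 - v i 0 * (x j 0 - o q j 0))
  + sTq x v (o q) 4 T * ((normv v ^+ 2) *+ (i == j) - v i 0 * v j 0)).
Proof.
rewrite /AT summxE; apply: eq_bigr => q _ /=.
rewrite !mxE !big_ord1 !mxE.
done.
Qed.
Lemma sq0 (p q : R) : p^+2 + q^+2 = 0 -> p = 0 /\ q = 0.
Proof.
move=> h; have h1 := sqr_ge0 p; have h2 := sqr_ge0 q.
have e1 : p^+2 = 0 by lra. have e2 : q^+2 = 0 by lra.
by split; apply/eqP; rewrite -sqrf_eq0; apply/eqP.
Qed.

Lemma quadid (A00 A01 A11 c0 c1 : R) : 0 < c0^+2 + c1^+2 ->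
  (A00 + A11)/2 = ((c0^+2 * A00 + 2 * c0 * c1 * A01 + c1^+2 * A11)
     + (c1^+2 * A00 - 2 * c0 * c1 * A01 + c0^+2 * A11)) / (2 * (c0^+2 + c1^+2)) /\
  Num.sqrt (((A00 - A11)/2)^+2 + A01^+2) =
  Num.sqrt (((c1^+2 * A00 - 2 * c0 * c1 * A01 + c0^+2 * A11)
             - (c0^+2 * A00 + 2 * c0 * c1 * A01 + c1^+2 * A11))^+2
     + 4 * (- c0 * c1 * A00 + (c0^+2 - c1^+2) * A01 + c0 * c1 * A11)^+2) / (2 * (c0^+2 + c1^+2)).
Proof.
move=> N0; have hN : c0^+2 + c1^+2 != 0 by rewrite gt_eqF.
split; first by field.
set Y := (_ - _)^+2 + _.
have Y0 : 0 <= Y by rewrite /Y addr_ge0 ?sqr_ge0 // mulr_ge0 // sqr_ge0.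
have Z0 : 0 < 2 * (c0^+2 + c1^+2) by rewrite mulr_gt0.
rewrite (_ : ((A00 - A11)/2)^+2 + A01^+2 = Y * ((2 * (c0^+2 + c1^+2))^+2)^-1); last first.
  by rewrite /Y; field.
rewrite sqrtrM // sqrtrV ?sqr_ge0 // sqrtr_sqr gtr0_norm //.
Qed.
End M.

Theorem lemma6 (R : realType) (Q : nat) (o : 'I_Q -> 'cV[R]_2)
  (x v : 'cV[R]_2) :
  (0 < Q)%N ->
  v != 0 ->
  (forall (t : nat) (q : 'I_Q), (1 <= t)%N -> x + t%:R *: v != o q) ->
  ((fun T : nat => lambda_min (AT o x v T)
      - \sum_(q < Q) sTq x v (o q) 2 T * normv (Pperp v *m lvec x (o q)) ^+ 2)
     @ \oo --> (0:R)%R)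
  /\
  ((fun T : nat => lambda_max (AT o x v T)
      / (\sum_(q < Q) sTq x v (o q) 4 T * normv v ^+ 2))
     @ \oo --> (1:R)%R).
Proof.
move=> Q0 hv hx.
pose N := v 0 0 ^+ 2 + v 1 0 ^+ 2.
have NE : normv v ^+ 2 = N by rewrite normv2 dotvE /N !expr2.
have N0 : 0 < N.
  rewrite lt_def addr_ge0 ?sqr_ge0 // andbT; apply: contra hv => /eqP hN.
  have [h0 h1] := @sq0 R _ _ hN.
  apply/eqP/matrixP => i j; rewrite (ord1 j) mxE.
  case: i => [[|[|i]] Hi] //.
  + by rewrite (_ : Ordinal Hi = 0) //; apply: val_inj.
  + by rewrite (_ : Ordinal Hi = 1) //; apply: val_inj.
have hN : N != 0 by rewrite gt_eqF.
pose a q := x 0 0 - o q 0 0.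
pose b q := x 1 0 - o q 1 0.
pose g q t := (a q + t%:R * v 0 0)^+2 + (b q + t%:R * v 1 0)^+2.
have dist4 q t : dist_tq x v (o q) t ^+ 4 = g q t ^+ 2.
  rewrite /dist_tq (_ : 4 = 2 * 2)%N // exprM normv2 dotvE /lvec !mxE /g /a /b.
  by rewrite !expr2.
have gpos q t : (1 <= t)%N -> 0 < g q t.
  move=> t1; rewrite lt_def addr_ge0 ?sqr_ge0 // andbT; apply/negP => /eqP h.
  have [e0 e1] := @sq0 R _ _ h.
  move: (hx t q t1) => /negP; apply; apply/eqP/matrixP => i j; rewrite (ord1 j) !mxE.
  move: e0 e1; rewrite /a /b => e0 e1.
  case: i => [[|[|i]] Hi] //.
  + rewrite (_ : Ordinal Hi = 0); last by apply: val_inj.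
    lra.
  + rewrite (_ : Ordinal Hi = 1); last by apply: val_inj.
    lra.
have sE n q T : sTq x v (o q) n T = \sum_(1 <= t < T.+1) (t%:R ^+ n / g q t ^+ 2).
  by rewrite /sTq; apply: eq_bigr => t _; rewrite dist4.
have smn n q : (n <= 3)%N -> small R (fun T => sTq x v (o q) n T).
  move=> n3; have [k k0 hk] := @qlow R (a q) (b q) (v 0 0) (v 1 0) N0 (gpos q).
  have -> : (fun T => sTq x v (o q) n T) = (fun T => \sum_(1 <= t < T.+1) (t%:R ^+ n / g q t ^+ 2)).
    by apply: funext => T; rewrite sE.
  exact: (@s_small R (g q) n k k0 n3 hk).
pose X T := \sum_(q < Q) sTq x v (o q) 4 T.
have s4ge0 q T : 0 <= sTq x v (o q) 4 T.
  by rewrite sE sumr_ge0 // => t _; rewrite divr_ge0 ?sqr_ge0 // exprn_ge0.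
pose q0 := Ordinal Q0.
have [K K0 hK] := @qup R (a q0) (b q0) (v 0 0) (v 1 0).
have Xlow T : K^-2 * T%:R <= X T.
  rewrite /X (bigD1 q0) //=; apply: le_trans (_ : sTq x v (o q0) 4 T <= _).
    by rewrite sE mulrC; apply: (@s4_low R (g q0) K K0 (gpos q0) hK).
  by rewrite lerDl sumr_ge0.
have A00 T : AT o x v T 0 0 = \sum_(q < Q) (sTq x v (o q) 2 T * (b q ^+ 2)
    + sTq x v (o q) 3 T * (2 * (b q * v 1 0)) + sTq x v (o q) 4 T * (v 1 0 ^+ 2)).
  rewrite ATE; apply: eq_bigr => q _ /=; rewrite !dotvE NE /lvec !mxE /N /a /b /=.
  ring.
have A11 T : AT o x v T 1 1 = \sum_(q < Q) (sTq x v (o q) 2 T * (a q ^+ 2)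
    + sTq x v (o q) 3 T * (2 * (a q * v 0 0)) + sTq x v (o q) 4 T * (v 0 0 ^+ 2)).
  rewrite ATE; apply: eq_bigr => q _ /=; rewrite !dotvE NE /lvec !mxE /N /a /b /=.
  ring.
have A01 T : AT o x v T 0 1 = \sum_(q < Q) (sTq x v (o q) 2 T * (- (a q * b q))
    + sTq x v (o q) 3 T * (- (a q * v 1 0 + v 0 0 * b q)) + sTq x v (o q) 4 T * (- (v 0 0 * v 1 0))).
  rewrite ATE; apply: eq_bigr => q _ /=; rewrite !dotvE NE /lvec !mxE /N /a /b /=.
  ring.
have A10 T : AT o x v T 1 0 = AT o x v T 0 1.
  rewrite A01 ATE; apply: eq_bigr => q _ /=; rewrite !dotvE NE /lvec !mxE /N /a /b /=.
  ring.
pose P T := \sum_(q < Q) ((a q * v 1 0 - b q * v 0 0)^+2 * sTq x v (o q) 2 T).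
pose E T := \sum_(q < Q) ((a q * v 0 0 + b q * v 1 0)^+2 * sTq x v (o q) 2 T
     + (2 * (a q * v 0 0 + b q * v 1 0) * N) * sTq x v (o q) 3 T).
pose Rr T := \sum_(q < Q) ((- (a q * v 0 0 + b q * v 1 0) * (b q * v 0 0 - a q * v 1 0)) * sTq x v (o q) 2 T
     + (- N * (b q * v 0 0 - a q * v 1 0)) * sTq x v (o q) 3 T).
have hPq T : v 0 0 ^+ 2 * AT o x v T 0 0 + 2 * v 0 0 * v 1 0 * AT o x v T 0 1
     + v 1 0 ^+ 2 * AT o x v T 1 1 = P T.
  rewrite A00 A01 A11 /P !mulr_sumr -!big_split /=; apply: eq_bigr => q _; ring.
have hCq T : v 1 0 ^+ 2 * AT o x v T 0 0 - 2 * v 0 0 * v 1 0 * AT o x v T 0 1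
     + v 0 0 ^+ 2 * AT o x v T 1 1 = N^+2 * X T + E T.
  rewrite A00 A01 A11 /X /E !mulr_sumr -sumrN -!big_split /=; apply: eq_bigr => q _; rewrite /N; ring.
have hRq T : - v 0 0 * v 1 0 * AT o x v T 0 0 + (v 0 0 ^+ 2 - v 1 0 ^+ 2) * AT o x v T 0 1
     + v 0 0 * v 1 0 * AT o x v T 1 1 = Rr T.
  rewrite A00 A01 A11 /Rr !mulr_sumr -!big_split /=; apply: eq_bigr => q _; rewrite /N; ring.
have LAM T : lambda_min (AT o x v T) = (P T + (N^+2 * X T + E T))/(2*N)
     - Num.sqrt ((N^+2 * X T + E T - P T)^+2 + 4 * Rr T ^+ 2)/(2*N) /\
   lambda_max (AT o x v T) = (P T + (N^+2 * X T + E T))/(2*N)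
     + Num.sqrt ((N^+2 * X T + E T - P T)^+2 + 4 * Rr T ^+ 2)/(2*N).
  have [l1 l2] := @lam2 R (AT o x v T) (esym (A10 T)).
  have [q1 q2] := @quadid R (AT o x v T 0 0) (AT o x v T 0 1) (AT o x v T 1 1) (v 0 0) (v 1 0) N0.
  by rewrite l1 l2 q1 q2 hPq hCq hRq.
have PP q : normv (Pperp v *m lvec x (o q)) ^+ 2 = (a q * v 1 0 - b q * v 0 0)^+2 / N.
  rewrite normv2 dotvE /Pperp NE !mxE !sum2 !mxE !big_ord1 !mxE /= /a /b /N.
  by field.
have smP : small R P.
  by apply: small_big => q; apply: smallZ; apply: smn.
have smE : small R E.
  by apply: small_big => q; apply: smallD; apply: smallZ; apply: smn.
have smR : small R Rr.
  by apply: small_big => q; apply: smallD; apply: smallZ; apply: smn.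
have Kp : 0 < K^-2 by rewrite invr_gt0 exprn_gt0.
have [F1 F2] := @final R P E Rr X N (K^-2) N0 Kp Xlow smP smE smR.
split.
- have -> : (fun T : nat => lambda_min (AT o x v T)
      - \sum_(q < Q) sTq x v (o q) 2 T * normv (Pperp v *m lvec x (o q)) ^+ 2) =
    (fun T => (P T + (N^+2 * X T + E T))/(2*N)
     - Num.sqrt ((N^+2 * X T + E T - P T)^+2 + 4 * Rr T ^+ 2)/(2*N) - P T / N).
    apply: funext => T; rewrite (LAM T).1; congr (_ - _).
    by rewrite /P mulr_suml; apply: eq_bigr => q _; rewrite PP; field.
  exact: F1.
- have -> : (fun T : nat => lambda_max (AT o x v T)
      / (\sum_(q < Q) sTq x v (o q) 4 T * normv v ^+ 2)) =
    (fun T => ((P T + (N^+2 * X T + E T))/(2*N)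
     + Num.sqrt ((N^+2 * X T + E T - P T)^+2 + 4 * Rr T ^+ 2)/(2*N)) / (X T * N)).
    apply: funext => T; rewrite (LAM T).2; congr (_ / _).
    by rewrite /X mulr_suml; apply: eq_bigr => q _; rewrite NE.
  exact: F2.
Qed.
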